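(* Let $n\ge1$ and let $\mathcal I^G$ be an imaginarity measure of $n$-mode Gaussian states. Define, for every $n$-mode Gaussian channel $\phi$, $$\mathcal I_s^{GC}(\phi):=\sup_{\rho\in\mathcal{RGS}_n}\mathcal I^G(\phi(\rho)).$$ Then $\mathcal I_s^{GC}$ is an imaginarity measure for Gaussian channels, i.e.: (GC1) $\mathcal I_s^{GC}(\phi)\ge0$ for every $n$-mode Gaussian channel $\phi$, with $\mathcal I_s^{GC}(\phi)=0$ if and only if $\phi$ is a real Gaussian channel; and (GC2) $\mathcal I_s^{GC}(\Phi(\phi))\le\mathcal I_s^{GC}(\phi)$ for every $n$-mode real Gaussian superchannel $\Phi$ and every $n$-mode Gaussian channel $\phi$.
   Context: Consider $n$ bosonic modes, $H=H_1\otimes\cdots\otimes H_n$ with Fock bases, and quadrature operators $\hat Q_k=\hat a_k+\hat a_k^\dagger$, $\hat P_k=-i(\hat a_k-\hat a_k^\dagger)$, $R=(\hat Q_1,\hat P_1,\dots,\hat Q_n,\hat P_n)$. A state $\rho$ is Gaussian with displacement vector $\bar{\mathbf d}_0\in\mathbb R^{2n}$ and covariance matrix $\nu$ (real symmetric $2n\times2n$, $\nu+i\Delta_n\ge0$) if $\mathrm{Tr}(\rho\, e^{iR^{\mathrm T}z})=\exp(-\tfrac12 z^{\mathrm T}\nu z+i\bar{\mathbf d}_0^{\mathrm T}z)$ for all $z\in\mathbb R^{2n}$. A Gaussian state is real if all its matrix entries in the $n$-mode Fock basis are real; $\mathcal{RGS}_n$ denotes the set of real $n$-mode Gaussian states.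 Let $\Delta_n=\bigoplus_{k=1}^n\begin{pmatrix}0&1\\-1&0\end{pmatrix}$, $\Sigma_n=\bigoplus_{k=1}^n\mathrm{diag}(1,-1)$. An $n$-mode Gaussian channel $\phi=\phi(T,N,\mathbf d)$ (real $2n\times2n$ $T$, $N=N^{\mathrm T}\ge0$, $\mathbf d\in\mathbb R^{2n}$, $N+i\Delta_n-iT\Delta_nT^{\mathrm T}\ge0$) maps the Gaussian state with $(\bar{\mathbf d}_0,\nu)$ to the Gaussian state with $(T\bar{\mathbf d}_0+\mathbf d,\ T\nu T^{\mathrm T}+N)$. A Gaussian channel is real if it maps real Gaussian states to real Gaussian states; it is known that this holds iff $d_{2k}=0$, $n_{2k-1,2l}=0$ for all $k,l$, and either $t_{2k,2l-1}=t_{2k,2l}=0$ for all $k,l$ or $t_{2k-1,2l}=t_{2k,2l-1}=0$ for all $k,l$. An $n$-mode Gaussian superchannel $\Phi(A,O,Y,\bar{\mathbf d})$ (real $2n\times 2n$ $A,O,Y$, $Y=Y^{\mathrm T}$, $OO^{\mathrm T}=I$, $Y+i\Delta_n-iA\Delta_nA^{\mathrm T}\ge0$, $i\Delta_n-iO\Delta_nO^{\mathrm T}\ge0$, $\bar{\mathbf d}\in\mathbb R^{2n}$) acts by $\Phi(\phi(T,N,\mathbf d))=\phi(AT\Sigma_nO^{\mathrm T}\Sigma_n,\,ANA^{\mathrm T}+Y,\,A\mathbf d+\bar{\mathbf d})$; equivalently $\Phi(\phi)=\phi_2\circ\phi\circ\phi_1$ with $\phi_1=\phi(\Sigma_nO^{\mathrm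 T}\Sigma_n,0,0)$, $\phi_2=\phi(A,Y,\bar{\mathbf d})$. It is real if it maps real Gaussian channels to real Gaussian channels. An imaginarity measure of $n$-mode Gaussian states is a map $\mathcal I^G$ from $n$-mode Gaussian states to $[0,\infty)$ such that $\mathcal I^G(\rho)=0$ iff $\rho$ is real, and $\mathcal I^G(\phi(\rho))\le\mathcal I^G(\rho)$ for all real Gaussian channels $\phi$ and all Gaussian states $\rho$. *)

(* Defs.v *)
From HB Require Import structures.
From mathcomp Require Import all_boot all_order all_algebra.
From mathcomp Require Import complex.
From mathcomp Require Import classical_sets reals constructive_ereal ereal.
Set Implicit Arguments.
Unset Strict Implicit.
Unset Printing Implicit Defensive.
Import Order.TTheory GRing.Theory Num.Theory.
Local Open Scope ring_scope.

Section Gaussian.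
Variable R : realType.
Variable n : nat.
(* phase-space dimension 2n; indices 0..2n-1, index 2k-2 <-> Q_k, 2k-1 <-> P_k *)
Local Notation m := (n.*2).

(* Delta_n = (+)_k [[0,1],[-1,0]] *)
Definition Delta : 'M[R]_m :=
  \matrix_(i, j) (if ~~ odd i && (j == i.+1 :> nat) then 1
                  else if odd i && (j.+1 == i :> nat) then -1 else 0).

Definition Sigma : 'M[R]_m :=
  \matrix_(i, j) (if i == j then (if odd i then -1 else 1) else 0).

Definition cplx (p q : nat) (A : 'M[R]_(p, q)) : 'M[R[i]]_(p, q) :=
  map_mx (fun x => Complex x 0) A.

Definition iC : R[i] := Complex 0 1.

(* positive semidefiniteness of a complex square matrix M:
   v^* M v >= 0 (i.e. real and nonnegative) for every complex vector v *)
Definition psdC (M : 'M[R[i]]_m) : Prop :=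
  forall v : 'cV[R[i]]_m, 0 <= ((map_mx Num.conj v)^T *m M *m v) 0 0.

Definition psdR (M : 'M[R]_m) : Prop :=
  forall v : 'cV[R]_m, 0 <= (v^T *m M *m v) 0 0.

(* The n-mode Gaussian state with displacement d0 and covariance nu
   (its characteristic function being exp(-z^T nu z/2 + i d0^T z)) exists
   iff nu is real symmetric with nu + i Delta_n >= 0. *)
Definition is_gauss_state (d0 : 'cV[R]_m) (nu : 'M[R]_m) : Prop :=
  nu^T = nu /\ psdC (cplx nu + iC *: cplx Delta).

(* Realness of a Gaussian state (all Fock-basis matrix entries real).
   Complex conjugation in the Fock basis fixes Q_k and flips P_k, so the
   state is real iff it is invariant under (d0,nu) |-> (Sigma d0, Sigma nu Sigma),
   i.e. d_{2k} = 0 and nu_{2k-1,2l} = 0 (1-based indices). *)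
Definition real_state (d0 : 'cV[R]_m) (nu : 'M[R]_m) : Prop :=
  (forall i : 'I_m, odd i -> d0 i 0 = 0) /\
  (forall i j : 'I_m, ~~ odd i -> odd j -> nu i j = 0).

Record gchannel := GChannel { chT : 'M[R]_m; chN : 'M[R]_m; chd : 'cV[R]_m }.

Definition is_gauss_channel (phi : gchannel) : Prop :=
  (chN phi)^T = chN phi /\ psdR (chN phi) /\
  psdC (cplx (chN phi) + iC *: cplx Delta
        - iC *: cplx (chT phi *m Delta *m (chT phi)^T)).

Definition ch_disp (phi : gchannel) (d0 : 'cV[R]_m) : 'cV[R]_m :=
  chT phi *m d0 + chd phi.
Definition ch_cov (phi : gchannel) (nu : 'M[R]_m) : 'M[R]_m :=
  chT phi *m nu *m (chT phi)^T + chN phi.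

Definition real_channel (phi : gchannel) : Prop :=
  forall d0 nu, is_gauss_state d0 nu -> real_state d0 nu ->
    real_state (ch_disp phi d0) (ch_cov phi nu).

Record gsuperchannel :=
  GSuper { scA : 'M[R]_m; scO : 'M[R]_m; scY : 'M[R]_m; scd : 'cV[R]_m }.

Definition is_gauss_superchannel (Phi : gsuperchannel) : Prop :=
  (scY Phi)^T = scY Phi /\ scO Phi *m (scO Phi)^T = 1%:M /\
  psdC (cplx (scY Phi) + iC *: cplx Delta
        - iC *: cplx (scA Phi *m Delta *m (scA Phi)^T)) /\
  psdC (iC *: cplx Delta - iC *: cplx (scO Phi *m Delta *m (scO Phi)^T)).

Definition sc_apply (Phi : gsuperchannel) (phi : gchannel) : gchannel :=
  GChannel (scA Phi *m chT phi *m Sigma *m (scO Phi)^T *m Sigma)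
           (scA Phi *m chN phi *m (scA Phi)^T + scY Phi)
           (scA Phi *m chd phi + scd Phi).

Definition real_superchannel (Phi : gsuperchannel) : Prop :=
  forall phi, is_gauss_channel phi -> real_channel phi ->
    real_channel (sc_apply Phi phi).

(* imaginarity measure of n-mode Gaussian states; a Gaussian state is
   identified with its (displacement, covariance) pair, and I is only
   constrained on genuine Gaussian states *)
Definition imag_measure (I : 'cV[R]_m -> 'M[R]_m -> R) : Prop :=
  (forall d0 nu, is_gauss_state d0 nu -> 0 <= I d0 nu) /\
  (forall d0 nu, is_gauss_state d0 nu -> (I d0 nu = 0 <-> real_state d0 nu)) /\
  (forall phi d0 nu, is_gauss_channel phi -> real_channel phi ->
     is_gauss_state d0 nu -> I (ch_disp phi d0) (ch_cov phi nu) <= I d0 nu).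

Definition IsGC (I : 'cV[R]_m -> 'M[R]_m -> R) (phi : gchannel) : \bar R :=
  ereal_sup [set y : \bar R | exists (d0 : 'cV[R]_m) (nu : 'M[R]_m),
              [/\ is_gauss_state d0 nu, real_state d0 nu &
                  y = (I (ch_disp phi d0) (ch_cov phi nu))%:E]]%classic.

End Gaussian.

(* Main.v *)
Require Import Defs.
From HB Require Import structures.
From mathcomp Require Import all_boot all_order all_algebra.
From mathcomp Require Import complex.
From mathcomp Require Import classical_sets reals constructive_ereal ereal.
Import Order.TTheory GRing.Theory Num.Theory.
Local Open Scope ring_scope.
Set Implicit Arguments.
Unset Strict Implicit.
Unset Printing Implicit Defensive.

Lemma cplxE (R : realType) p q (A : 'M[R]_(p,q)) :
  cplx A = map_mx (real_complex R) A.
Proof. by []. Qed.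

Lemma cplxM (R : realType) p q r (A : 'M[R]_(p,q)) (B : 'M[R]_(q,r)) :
  cplx (A *m B) = cplx A *m cplx B.
Proof. by rewrite !cplxE map_mxM. Qed.
Lemma cplxT (R : realType) p q (A : 'M[R]_(p,q)) : cplx A^T = (cplx A)^T.
Proof. by rewrite !cplxE map_trmx. Qed.
Lemma cplxD (R : realType) p q (A B : 'M[R]_(p,q)) : cplx (A + B) = cplx A + cplx B.
Proof. by rewrite !cplxE map_mxD. Qed.
Lemma cplxN (R : realType) p q (A : 'M[R]_(p,q)) : cplx (- A) = - cplx A.
Proof. by rewrite !cplxE map_mxN. Qed.
Lemma cplx0 (R : realType) p q : cplx (0 : 'M[R]_(p,q)) = 0.
Proof. by rewrite !cplxE map_mx0. Qed.
Lemma cplx1 (R : realType) p : cplx (1%:M : 'M[R]_p) = 1%:M.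
Proof. by rewrite !cplxE map_mx1. Qed.
Lemma conj_real (R : realType) (x : R) : Num.conj (x%:C)%C = (x%:C)%C.
Proof.
apply: conj_Creal; rewrite realE.
have := @real_leVge R x 0 (num_real x) (num_real 0).
case/orP=> h; apply/orP; [right|left].
  by rewrite -[0]/((0:R)%:C)%C lecR.
by rewrite -[0]/((0:R)%:C)%C lecR.
Qed.
Lemma conj_iC (R : realType) : Num.conj (iC R) = - iC R.
Proof. by rewrite /iC -[Complex 0 1]/('i%C) complexiE conjCi. Qed.


Notation cj v := (map_mx Num.conj v).

Lemma cj_cplx (R : realType) p q (A : 'M[R]_(p,q)) : cj (cplx A) = cplx A.
Proof. by apply/matrixP=> i j; rewrite !mxE conj_real. Qed.

Lemma cjM (R : realType) p q r (A : 'M[R[i]]_(p,q)) (B : 'M[R[i]]_(q,r)) :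
  cj (A *m B) = cj A *m cj B.
Proof. by rewrite map_mxM. Qed.

Lemma psdC_add (R : realType) n (K1 K2 : 'M[R[i]]_(n.*2)) :
  psdC K1 -> psdC K2 -> psdC (K1 + K2).
Proof.
move=> h1 h2 v; rewrite mulmxDr mulmxDl mxE; exact: addr_ge0.
Qed.

Lemma psdC_cong (R : realType) n (B : 'M[R]_(n.*2)) (K : 'M[R[i]]_(n.*2)) :
  psdC K -> psdC (cplx B *m K *m (cplx B)^T).
Proof.
move=> h v; have := h ((cplx B)^T *m v).
by rewrite cjM -map_trmx cj_cplx trmx_mul trmxK !mulmxA.
Qed.

Lemma psdC_psdR (R : realType) n (Y K : 'M[R]_(n.*2)) :
  psdC (cplx Y + iC R *: cplx K) -> psdR Y.
Proof.
move=> h v; have := h (cplx v).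
rewrite cj_cplx -cplxT mulmxDr mulmxDl -scalemxAr -scalemxAl -!cplxM.
rewrite mxE [X in _ + X]mxE /cplx !mxE /iC lecE /=.
by rewrite !mul0r mul1r mulr0 subr0 addr0 => /andP[].
Qed.

Definition sgm (i : nat) : nat := if odd i then i.-1 else i.+1.
Definition sgn (R : realType) (i : nat) : R := if odd i then -1 else 1.

Lemma odd_sgm i : odd (sgm i) = ~~ odd i.
Proof.
rewrite /sgm; case: ifP => h; last by rewrite /= h.
by case: i h => //= i /negbTE.
Qed.

Lemma sgmK i : sgm (sgm i) = i.
Proof.
rewrite /sgm; case h: (odd i).
  by case: i h => //= i /negbTE ->.
by rewrite /= h.
Qed.

Lemma sgn_sgm (R : realType) i : sgn R (sgm i) = - sgn R i.
Proof. by rewrite /sgn odd_sgm; case: (odd i); rewrite ?opprK. Qed.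

Lemma sgn2 (R : realType) i : sgn R i * sgn R i = 1.
Proof. by rewrite /sgn; case: (odd i); rewrite ?mulrNN mulr1. Qed.

Lemma sgm_lt n (i : 'I_(n.*2)) : (sgm i < n.*2)%N.
Proof.
rewrite /sgm; case h: (odd i).
  by apply: leq_ltn_trans (ltn_ord i); exact: leq_pred.
have := ltn_ord i; rewrite leq_eqVlt => /orP[/eqP e|] //.
by move/(congr1 odd): e; rewrite odd_double /= h.
Qed.

Definition sgmo n (i : 'I_(n.*2)) : 'I_(n.*2) := Ordinal (sgm_lt i).

Lemma sgm_eq (i j : nat) : (j == sgm i) = (i == sgm j).
Proof.
apply/eqP/eqP=> ->; by rewrite sgmK.
Qed.

Lemma DeltaE (R : realType) n (i j : 'I_(n.*2)) :
  Delta R n i j = ((j : nat) == sgm i)%:R * sgn R i.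
Proof.
rewrite mxE /sgm /sgn; case h: (odd i) => /=.
  case: (i : nat) h => [|i'] //= h.
  by rewrite eqSS; case: ifP => _; rewrite /= ?mul1r ?mul0r.
by case: ifP => _; rewrite /= ?mul1r ?mul0r ?mulr1.
Qed.

Lemma sum_pick (R : realType) n (k : 'I_(n.*2)) (F : 'I_(n.*2) -> R) :
  \sum_(j < n.*2) ((j : nat) == k)%:R * F j = F k.
Proof.
rewrite (bigD1 k) //= eqxx mul1r big1 ?addr0 // => j hj.
have -> : ((j:nat) == k) = false by apply/negbTE.
by rewrite mul0r.
Qed.

Lemma Delta2 (R : realType) n : Delta R n *m Delta R n = - 1%:M.
Proof.
apply/matrixP=> i j; rewrite !mxE.
under eq_bigr => c _ do rewrite DeltaE mulrAC -mulrA.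
have -> : sgm i = sgmo i by [].
rewrite sum_pick DeltaE /= sgmK sgn_sgm mulrN mulNr -mulrA sgn2 mulr1.
rewrite eq_sym.
by [].
Qed.

Lemma DeltaT (R : realType) n : (Delta R n)^T = - Delta R n.
Proof.
apply/matrixP=> i j; rewrite mxE [RHS]mxE !DeltaE sgm_eq.
have [e|ne] := eqVneq (j:nat) (sgm i); last by rewrite /= ?mulr0n !(mul0r, mulr0) oppr0.
by rewrite -[sgn R j]/(sgn R (j : nat)) e sgn_sgm mulrN.
Qed.

Definition sgnrow (R : realType) n : 'rV[R]_(n.*2) := \row_i sgn R i.

Lemma SigmaE (R : realType) n : Sigma R n = diag_mx (sgnrow R n).
Proof.
apply/matrixP=> i j; rewrite !mxE /sgn; case: eqP => [->|_] //.
Qed.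

Lemma Sigma2 (R : realType) n : Sigma R n *m Sigma R n = 1%:M.
Proof.
by rewrite SigmaE mulmx_diag; apply/matrixP=> i j; rewrite !mxE sgn2.
Qed.

Lemma SigmaT (R : realType) n : (Sigma R n)^T = Sigma R n.
Proof. by rewrite SigmaE tr_diag_mx. Qed.

Lemma SDS (R : realType) n :
  Sigma R n *m Delta R n *m Sigma R n = - Delta R n.
Proof.
rewrite SigmaE mul_diag_mx mul_mx_diag; apply/matrixP=> i j.
rewrite [LHS]mxE [RHS]mxE [in LHS]mxE DeltaE !mxE.
have [e|ne] := eqVneq (j:nat) (sgm i); last by rewrite /= ?mulr0n !(mul0r, mulr0) oppr0.
rewrite -[sgn R j]/(sgn R (j : nat)) e sgn_sgm.
by rewrite /= mulr1n !mul1r mulrN sgn2 mul1r.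
Qed.

From mathcomp Require Import ring.

Lemma iC2 (R : realType) : iC R * iC R = -1.
Proof. by rewrite -expr2 -[iC R]/('i%C) sqr_i. Qed.

Lemma cj_iC (R : realType) p q (A : 'M[R]_(p,q)) :
  cj (iC R *: cplx A) = - (iC R *: cplx A).
Proof.
by apply/matrixP=> i j; rewrite !mxE rmorphM /= conj_iC -[Complex (A i j) 0]/((A i j)%:C)%C conj_real mulNr.
Qed.

Lemma psd_gram (R : realType) n (w : 'cV[R[i]]_(n.*2)) :
  0 <= ((cj w)^T *m w) 0 0.
Proof.
rewrite mxE; apply: sumr_ge0 => k _; rewrite !mxE mulrC; exact: mul_conjC_ge0.
Qed.

Lemma vac_psd (R : realType) n :
  psdC (cplx (1%:M : 'M[R]_(n.*2)) + iC R *: cplx (Delta R n)).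
Proof.
move=> v; rewrite cplx1.
set D := cplx (Delta R n); set B := 1%:M + iC R *: D.
have hDD : D *m D = - 1%:M by rewrite /D -cplxM Delta2 cplxN cplx1.
have hB : (cj B)^T = B.
  rewrite /B map_mxD map_mx1 cj_iC linearD /= trmx1 linearN /= linearZ /=.
  by rewrite /D -cplxT DeltaT cplxN scalerN opprK.
have hBB : (cj B)^T *m B = 2%:R *: B.
  have e1 : D *m B = D + iC R *: (- 1%:M) by rewrite /B mulmxDr mulmx1 -scalemxAr hDD.
  have e2 : B *m B = B + iC R *: (D *m B) by rewrite {1}/B mulmxDl mul1mx -scalemxAl.
  rewrite hB e2 e1 scalerDr scalerA iC2 scaleN1r opprK [iC R *: D + _]addrC.
  by rewrite scaler_nat mulr2n.
have := psd_gram (B *m v).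
rewrite cjM trmx_mul -!mulmxA (mulmxA (cj B)^T) hBB -scalemxAl -scalemxAr.
by rewrite mxE !mulmxA pmulr_rge0 // ltr0n.
Qed.

Lemma zid (V : zmodType) (a b c d : V) : a + b + c = (a + d) + (b + c - d).
Proof. by rewrite -[RHS]addrA [d + _]addrC subrK addrA. Qed.

Lemma gauss_apply (R : realType) n (phi : gchannel R n) d nu :
  is_gauss_channel phi -> is_gauss_state d nu ->
  is_gauss_state (ch_disp phi d) (ch_cov phi nu).
Proof.
case: phi => T N dd [/= hNs [hNp hNc]] [hs hc]; rewrite /ch_cov /=; split.
  by rewrite linearD /= !trmx_mul trmxK hs mulmxA -[in RHS]hNs.
have -> : cplx (T *m nu *m T^T + N) + iC R *: cplx (Delta R n) =
  cplx T *m (cplx nu + iC R *: cplx (Delta R n)) *m (cplx T)^T +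
  (cplx N + iC R *: cplx (Delta R n) - iC R *: cplx (T *m Delta R n *m T^T)).
  rewrite mulmxDr mulmxDl -scalemxAr -scalemxAl -cplxT -!cplxM cplxD.
  exact: zid.
exact: (psdC_add (psdC_cong T hc) hNc).
Qed.

Lemma vac_gauss (R : realType) n : is_gauss_state (0 : 'cV[R]_(n.*2)) 1%:M.
Proof. split; [exact: trmx1 | exact: vac_psd]. Qed.

Lemma vac_real (R : realType) n : real_state (0 : 'cV[R]_(n.*2)) 1%:M.
Proof.
split=> [i _|i j hi hj]; rewrite !mxE //.
by have -> : (i == j) = false by apply/eqP=> e; move: hi; rewrite e hj.
Qed.

Lemma IsGC_ge0 (R : realType) n (I : 'cV[R]_(n.*2) -> 'M[R]_(n.*2) -> R)
  (phi : gchannel R n) :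
  imag_measure I -> is_gauss_channel phi -> (0 <= IsGC I phi)%E.
Proof.
move=> [hI0 _] hphi; apply: (@le_trans _ _ (I (ch_disp phi 0) (ch_cov phi 1%:M))%:E).
  by rewrite lee_fin; apply: hI0; apply: gauss_apply => //; exact: vac_gauss.
apply: ereal_sup_ubound; exists 0, 1%:M; split => //; [exact: vac_gauss|exact: vac_real].
Qed.

Lemma IsGC_eq0 (R : realType) n (I : 'cV[R]_(n.*2) -> 'M[R]_(n.*2) -> R)
  (phi : gchannel R n) :
  imag_measure I -> is_gauss_channel phi -> (IsGC I phi = 0%E <-> real_channel phi).
Proof.
move=> hI hphi; have hge := IsGC_ge0 hI hphi; case: hI => [hI0 [hIr _]].
split.
  move=> h0 d nu hg hr.
  have hg' := gauss_apply hphi hg.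
  apply/(hIr _ _ hg')/le_anti; rewrite hI0 // andbT.
  suff : ((I (ch_disp phi d) (ch_cov phi nu))%:E <= IsGC I phi)%E by rewrite h0 lee_fin.
  by apply: ereal_sup_ubound; exists d, nu; split.
move=> hre; apply/le_anti; rewrite hge andbT.
apply: ge_ereal_sup => y [d [nu [hg hr ->]]].
by rewrite lee_fin (proj2 (hIr _ _ (gauss_apply hphi hg)) (hre _ _ hg hr)).
Qed.

Lemma ortho_block (R : realType) n (M : 'M[R]_(n.*2)) :
  M^T *m M = 1%:M -> M *m M^T = 1%:M ->
  (forall l j : 'I_(n.*2), odd l -> ~~ odd j -> M l j = 0) ->
  forall i a : 'I_(n.*2), ~~ odd i -> odd a -> M i a = 0.
Proof.
move=> h1 h2 h0.
have S1 : \sum_(i < n.*2 | ~~ odd i) \sum_a M i a ^+ 2 = \sum_(i < n.*2 | ~~ odd i) 1.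
  apply: eq_bigr => i _; have := congr1 (fun X : 'M[R]_(n.*2) => X i i) h2.
  by rewrite !mxE eqxx mulr1n => <-; apply: eq_bigr => a _; rewrite mxE expr2.
have S2 : \sum_(j < n.*2 | ~~ odd j) \sum_a M a j ^+ 2 = \sum_(j < n.*2 | ~~ odd j) 1.
  apply: eq_bigr => j _; have := congr1 (fun X : 'M[R]_(n.*2) => X j j) h1.
  by rewrite !mxE eqxx mulr1n => <-; apply: eq_bigr => a _; rewrite mxE expr2.
have S2' : \sum_(j < n.*2 | ~~ odd j) \sum_a M a j ^+ 2 =
    \sum_(a < n.*2 | ~~ odd a) \sum_(j < n.*2 | ~~ odd j) M a j ^+ 2.
  transitivity (\sum_(j < n.*2 | ~~ odd j) \sum_(a < n.*2 | ~~ odd a) M a j ^+ 2).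
    apply: eq_bigr => j hj; rewrite (bigID (fun a : 'I_(n.*2) => ~~ odd a)) /=.
    rewrite [X in _ + X]big1 ?addr0 // => a; rewrite negbK => ha.
    by rewrite h0 // expr0n.
  exact: exchange_big.
have S1' : \sum_(i < n.*2 | ~~ odd i) \sum_a M i a ^+ 2 =
    \sum_(i < n.*2 | ~~ odd i) \sum_(a < n.*2 | ~~ odd a) M i a ^+ 2 +
    \sum_(i < n.*2 | ~~ odd i) \sum_(a < n.*2 | odd a) M i a ^+ 2.
  rewrite -big_split /=; apply: eq_bigr => i _.
  rewrite (bigID (fun a : 'I_(n.*2) => ~~ odd a)) /=.
  by congr (_ + _); apply: eq_bigl => a; rewrite negbK.
have Z : \sum_(i < n.*2 | ~~ odd i) \sum_(a < n.*2 | odd a) M i a ^+ 2 = 0.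
  move: S1; rewrite S1' -S2 S2' => /eqP.
  by rewrite -subr_eq0 addrAC subrr add0r => /eqP.
move=> i a hi ha.
have Hi := psumr_eq0P (fun i _ => sumr_ge0 _ (fun a _ => sqr_ge0 (M i a))) Z hi.
have Ha := psumr_eq0P (fun a _ => sqr_ge0 (M i a)) Hi ha.
by apply/eqP; rewrite -sqrf_eq0 Ha.
Qed.


Lemma psdR0 (R : realType) n : psdR (0 : 'M[R]_(n.*2)).
Proof. by move=> v; rewrite mulmx0 mul0mx mxE. Qed.

Lemma phi1_gauss (R : realType) n (O : 'M[R]_(n.*2)) :
  O *m O^T = 1%:M ->
  psdC (iC R *: cplx (Delta R n) - iC R *: cplx (O *m Delta R n *m O^T)) ->
  is_gauss_channel (GChannel (Sigma R n *m O^T *m Sigma R n) 0 0).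
Proof.
move=> hO hc. have hO' := mulmx1C hO.
split; first by rewrite trmx0.
split; first exact: psdR0.
rewrite /=.
set B := Sigma R n *m O^T.
have e1 : B *m Sigma R n *m Delta R n *m (B *m Sigma R n)^T = - (B *m Delta R n *m B^T).
  by rewrite trmx_mul SigmaT !mulmxA -(mulmxA B) -(mulmxA B) SDS mulmxN mulNmx.
have e2 : B *m (O *m Delta R n *m O^T) *m B^T = - Delta R n.
  rewrite /B trmx_mul trmxK SigmaT !mulmxA -(mulmxA _ O^T O) hO' mulmx1.
  by rewrite -(mulmxA _ O^T O) hO' mulmx1 SDS.
have -> : cplx 0 + iC R *: cplx (Delta R n) -
   iC R *: cplx (B *m Sigma R n *m Delta R n *m (B *m Sigma R n)^T)
  = cplx B *m (iC R *: cplx (Delta R n) - iC R *: cplx (O *m Delta R n *m O^T)) *m (cplx B)^T.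
  rewrite e1 mulmxBr mulmxBl -!scalemxAr -!scalemxAl -cplxT -!cplxM.
  by rewrite e2 cplx0 add0r !cplxN !scalerN !opprK addrC.
exact: (psdC_cong B hc).
Qed.

Lemma phi2_gauss (R : realType) n (A Y : 'M[R]_(n.*2)) db :
  Y^T = Y ->
  psdC (cplx Y + iC R *: cplx (Delta R n) - iC R *: cplx (A *m Delta R n *m A^T)) ->
  is_gauss_channel (GChannel A Y db).
Proof.
move=> hY hc; split=> //; split=> //.
apply: (@psdC_psdR _ _ _ (Delta R n - A *m Delta R n *m A^T)).
by rewrite cplxD cplxN scalerDr scalerN addrA.
Qed.

Lemma decomp_disp (R : realType) n (Phi : gsuperchannel R n) (phi : gchannel R n) d :
  ch_disp (sc_apply Phi phi) d =
  ch_disp (GChannel (scA Phi) (scY Phi) (scd Phi))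
    (ch_disp phi (ch_disp (GChannel (Sigma R n *m (scO Phi)^T *m Sigma R n) 0 0) d)).
Proof.
case: Phi => A O Y db; case: phi => T N dd; rewrite /ch_disp /= addr0.
by rewrite mulmxDr addrA !mulmxA.
Qed.

Lemma decomp_cov (R : realType) n (Phi : gsuperchannel R n) (phi : gchannel R n) nu :
  ch_cov (sc_apply Phi phi) nu =
  ch_cov (GChannel (scA Phi) (scY Phi) (scd Phi))
    (ch_cov phi (ch_cov (GChannel (Sigma R n *m (scO Phi)^T *m Sigma R n) 0 0) nu)).
Proof.
case: Phi => A O Y db; case: phi => T N dd; rewrite /ch_cov /= addr0.
by rewrite mulmxDr mulmxDl addrA !trmx_mul !mulmxA.
Qed.

Lemma sum_pickO (R : realType) q (l : 'I_q) (F : 'I_q -> R) :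
  \sum_(c < q) (c == l)%:R * F c = F l.
Proof.
rewrite (bigD1 l) //= eqxx mul1r big1 ?addr0 // => c hc.
by rewrite (negbTE hc) mul0r.
Qed.

Lemma delta_mulE (R : realType) p q r (k : 'I_p) (l : 'I_q) (X : 'M[R]_(q,r)) a c :
  (delta_mx k l *m X) a c = (a == k)%:R * X l c.
Proof.
rewrite mxE (bigD1 l) //= mxE eqxx andbT big1 ?addr0 // => e he.
by rewrite mxE (negbTE he) andbF mul0r.
Qed.

Lemma mul_deltaE (R : realType) p q r (k : 'I_r) (l : 'I_q) (X : 'M[R]_(p,q)) a c :
  (X *m delta_mx l k) a c = X a l * (c == k)%:R.
Proof.
rewrite mxE (bigD1 l) //= mxE eqxx /= big1 ?addr0 // => e he.
by rewrite mxE (negbTE he) mulr0.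
Qed.

Lemma neq_par n (a b : 'I_(n.*2)) : ~~ odd a -> odd b -> (a == b) = false.
Proof. by move=> ha hb; apply/eqP=> e; move: ha; rewrite e hb. Qed.

Lemma F1 (R : realType) n (Phi : gsuperchannel R n) :
  real_superchannel Phi -> forall d' nu', is_gauss_state d' nu' -> real_state d' nu' ->
  real_state (scA Phi *m d' + scd Phi) (scA Phi *m nu' *m (scA Phi)^T + scY Phi).
Proof.
move=> hR d' nu' hg hr.
have hphi : is_gauss_channel (GChannel 0 nu' d').
  case: hg => hs hc; split=> //; split; first exact: (psdC_psdR hc).
  by rewrite /= !mul0mx cplx0 scaler0 subr0.
have hrc : real_channel (GChannel 0 nu' d').
  by move=> d0 nu0 _ _; rewrite /ch_disp /ch_cov /= !mul0mx !add0r.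
have := hR _ hphi hrc 0 1%:M (vac_gauss R n) (vac_real R n).
by case: Phi hR => A O Y db hR; rewrite /ch_disp /ch_cov /= !mulmx0 !mul0mx !add0r.
Qed.

Lemma F2 (R : realType) n (Phi : gsuperchannel R n) :
  real_superchannel Phi -> forall p k l j : 'I_(n.*2), odd p -> odd k -> odd l -> ~~ odd j ->
  scA Phi p k * (Sigma R n *m (scO Phi)^T *m Sigma R n) l j = 0.
Proof.
move=> hR p k l j hp hk hl hj.
have hdb : scd Phi p 0 = 0.
  have := (F1 hR (vac_gauss R n) (vac_real R n)).1 p hp.
  by rewrite mulmx0 add0r.
set E : 'M[R]_(n.*2) := delta_mx k l.
have hE : E *m Delta R n *m E^T = 0.
  apply/matrixP=> a c; rewrite /E trmx_delta mul_deltaE delta_mulE DeltaE.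
  have -> : ((l : nat) == sgm l) = false.
    by apply/eqP=> e; move: (odd_sgm l); rewrite -e; case: (odd l).
  by rewrite !mxE mul0r !mulr0 mul0r.
have hphi : is_gauss_channel (GChannel E 1%:M 0).
  split; first exact: trmx1.
  split; first by rewrite /=; apply: (@psdC_psdR R n 1%:M (Delta R n)); exact: vac_psd.
  by rewrite /= hE cplx0 scaler0 subr0; exact: vac_psd.
have hrc : real_channel (GChannel E 1%:M 0).
  move=> d0 nu0 hg [hd hn]; split.
    by move=> a ha; rewrite /ch_disp /= addr0 delta_mulE hd // mulr0.
  move=> a b ha hb; rewrite /ch_cov /= mxE /E trmx_delta mul_deltaE delta_mulE.
  by rewrite (neq_par ha hk) mxE (neq_par ha hb) /= mulr0n !mul0r add0r.
have hgs : is_gauss_state (delta_mx j 0 : 'cV[R]_(n.*2)) 1%:M.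
  by split; [exact: trmx1 | exact: vac_psd].
have hrs : real_state (delta_mx j 0 : 'cV[R]_(n.*2)) 1%:M.
  split; last by case: (vac_real R n).
  move=> i hi; rewrite mxE.
  by have -> : (i == j) = false by apply/eqP=> e; move: hi; rewrite e (negbTE hj).
have := (hR _ hphi hrc _ _ hgs hrs).1 p hp.
rewrite /ch_disp /= mulmx0 add0r mxE hdb addr0 mul_deltaE eqxx mulr1.
rewrite -!mulmxA mxE.
under eq_bigr => c _ do rewrite delta_mulE mulrCA.
by rewrite sum_pickO !mulmxA.
Qed.

Lemma realM (R : realType) n (M : 'M[R]_(n.*2)) :
  (forall l j : 'I_(n.*2), odd l -> ~~ odd j -> M l j = 0) ->
  (forall i a : 'I_(n.*2), ~~ odd i -> odd a -> M i a = 0) ->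
  forall d nu, real_state d nu -> real_state (M *m d) (M *m nu *m M^T).
Proof.
move=> hPQ hQP d nu [hd hn]; split.
  move=> l hl; rewrite mxE big1 // => c _.
  by case hc: (odd c); [rewrite hd // mulr0 | rewrite (hPQ l c) ?hc // mul0r].
move=> i j hi hj; rewrite mxE big1 // => c _; rewrite !mxE.
case hc: (odd c); last by rewrite (hPQ j c) ?hc // mulr0.
rewrite big1 ?mul0r // => e _.
by case he: (odd e); [rewrite (hQP i e) // mul0r | rewrite (hn e c) ?he // mulr0].
Qed.

Lemma realA (R : realType) n (A Y : 'M[R]_(n.*2)) (db : 'cV[R]_(n.*2)) :
  (forall p k : 'I_(n.*2), odd p -> A p k = 0) ->
  (forall p : 'I_(n.*2), odd p -> db p 0 = 0) ->
  (forall i j : 'I_(n.*2), ~~ odd i -> odd j -> Y i j = 0) ->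
  forall x X, real_state (A *m x + db) (A *m X *m A^T + Y).
Proof.
move=> hA hdb hY x X; split.
  move=> p hp; rewrite mxE hdb // addr0 mxE big1 // => c _; by rewrite (hA p c) // mul0r.
move=> i j hi hj; rewrite mxE hY // addr0 mxE big1 // => c _.
by rewrite [A^T c j]mxE (hA j c) // mulr0.
Qed.

Lemma delta_state (R : realType) n (j : 'I_(n.*2)) : ~~ odd j ->
  is_gauss_state (delta_mx j 0 : 'cV[R]_(n.*2)) 1%:M /\
  real_state (delta_mx j 0 : 'cV[R]_(n.*2)) 1%:M.
Proof.
move=> hj; split; first by split; [exact: trmx1 | exact: vac_psd].
split; last by case: (vac_real R n).
move=> i hi; rewrite mxE.
by have -> : (i == j) = false by apply/eqP=> e; move: hi; rewrite e (negbTE hj).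
Qed.

Lemma GC2 (R : realType) n (I : 'cV[R]_(n.*2) -> 'M[R]_(n.*2) -> R)
  (hI : imag_measure I) (Phi : gsuperchannel R n) (phi : gchannel R n) :
  is_gauss_superchannel Phi -> real_superchannel Phi -> is_gauss_channel phi ->
  (IsGC I (sc_apply Phi phi) <= IsGC I phi)%E.
Proof.
move=> hPhi hR hphi.
have hge := IsGC_ge0 hI hphi.
have [hI0 [hIr hImono]] := hI.
have F1' := F1 hR.
have F2' := F2 hR.
case: Phi hPhi hR F1' F2' => A O Y db [/= hY [hO [hYc hOc]]] hR F1' F2' /=.
set M := Sigma R n *m O^T *m Sigma R n.
have g1 : is_gauss_channel (GChannel M 0 0) := phi1_gauss hO hOc.
have g2 : is_gauss_channel (GChannel A Y db) := phi2_gauss db hY hYc.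
apply: ge_ereal_sup => y [d [nu [hg hr ->]]].
rewrite decomp_disp decomp_cov /=.
set d1 := ch_disp (GChannel M 0 0) d; set nu1 := ch_cov (GChannel M 0 0) nu.
have hg1 : is_gauss_state d1 nu1 := gauss_apply g1 hg.
have hg2 := gauss_apply hphi hg1.
have hg3 := gauss_apply g2 hg2.
have hdb : forall p : 'I_(n.*2), odd p -> db p 0 = 0.
  move=> p hp; have := (F1' _ _ (vac_gauss R n) (vac_real R n)).1 p hp.
  by rewrite mulmx0 add0r.
case: (boolP [exists p : 'I_(n.*2), exists k : 'I_(n.*2), [&& odd p, odd k & A p k != 0]]).
  move=> /existsP [p /existsP [k /and3P [hp hk hpk]]].
  have hPQ : forall l j : 'I_(n.*2), odd l -> ~~ odd j -> M l j = 0.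
    move=> l j hl hj; have /eqP := F2' p k l j hp hk hl hj.
    by rewrite mulf_eq0 (negbTE hpk) /= => /eqP.
  have hO' := mulmx1C hO.
  have hMM1 : M^T *m M = 1%:M.
    rewrite /M !trmx_mul trmxK SigmaT !mulmxA -(mulmxA _ (Sigma R n) (Sigma R n)) Sigma2 mulmx1.
    by rewrite -(mulmxA _ O O^T) hO mulmx1 Sigma2.
  have hMM2 : M *m M^T = 1%:M.
    rewrite /M !trmx_mul trmxK SigmaT !mulmxA -(mulmxA _ (Sigma R n) (Sigma R n)) Sigma2 mulmx1.
    by rewrite -(mulmxA _ O^T O) hO' mulmx1 Sigma2.
  have hQP := ortho_block hMM1 hMM2 hPQ.
  have hr1 : real_state d1 nu1.
    by rewrite /d1 /nu1 /ch_disp /ch_cov /= !addr0; exact: realM hPQ hQP _ _ hr.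
  have h2 : ((I (ch_disp phi d1) (ch_cov phi nu1))%:E <= IsGC I phi)%E.
    by apply: ereal_sup_ubound; exists d1, nu1; split.
  have hr2 : real_channel (GChannel A Y db).
    by move=> d' nu' hg' hr'; exact: F1' hg' hr'.
  have h1 := hImono _ _ _ g2 hr2 hg2.
  rewrite -lee_fin in h1.
  exact: (le_trans h1 h2).
move=> hno.
have hA0 : forall p k : 'I_(n.*2), odd p -> A p k = 0.
  move=> p k hp; case hk: (odd k).
    apply/eqP; apply: contraNT hno => hpk; apply/existsP; exists p; apply/existsP; exists k.
    by rewrite hp hk hpk.
  have [hgs hrs] := delta_state R (negbT hk).
  have := (F1' _ _ hgs hrs).1 p hp.
  by rewrite mxE mul_deltaE eqxx mulr1n mulr1 hdb // addr0.
have hY0 : forall i j : 'I_(n.*2), ~~ odd i -> odd j -> Y i j = 0.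
  move=> i j hi hj; have := (F1' _ _ (vac_gauss R n) (vac_real R n)).2 i j hi hj.
  rewrite mxE [X in X + _]mxE big1 ?add0r // => c _.
  by rewrite [_^T c j]mxE (hA0 j c) // mulr0.
have hr3 := realA hA0 hdb hY0 (ch_disp phi d1) (ch_cov phi nu1).
have h0 := (proj2 (hIr _ _ hg3)) hr3.
by rewrite h0.
Qed.

Unset Implicit Arguments.
Set Strict Implicit.

Theorem theorem3 (R : realType) (n : nat) (hn : (1 <= n)%N)
  (I : 'cV[R]_(n.*2) -> 'M[R]_(n.*2) -> R) (hI : imag_measure I) :
  (* (GC1) *)
  (forall phi : gchannel R n, is_gauss_channel phi ->
     (0 <= IsGC I phi)%E /\ (IsGC I phi = 0%E <-> real_channel phi)) /\
  (* (GC2) *)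
  (forall (Phi : gsuperchannel R n) (phi : gchannel R n),
     is_gauss_superchannel Phi -> real_superchannel Phi ->
     is_gauss_channel phi ->
     (IsGC I (sc_apply Phi phi) <= IsGC I phi)%E).
Proof.
split.
  move=> phi hphi; split; [exact: IsGC_ge0 | exact: IsGC_eq0].
move=> Phi phi hPhi hR hphi; exact: GC2.
Qed.
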